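(* Let $p_i$ and $p_j$ ($i\ne j$) be two input-state walks in the colored union graph $\mathcal G_c$ of a switched system $(A_k,B_k)_{k=1}^N$, and let $\hat p_i,\hat p_j$ be their MDG-paths in the multi-layer dynamic graph $\hat{\mathcal G}_{\bar l}$ with $\bar l\ge\max\{|p_i|,|p_j|\}$. If either $p_i$ and $p_j$ are vertex-disjoint, or $\mathrm{ins}(p_i^c,p_j^c)\neq\emptyset$ and $\mathrm{Pins}(p_i^c\backslash p_j^c)$ and $\mathrm{Pins}(p_j^c\backslash p_i^c)$ have distinct color indices, then $\hat p_i$ and $\hat p_j$ are vertex-disjoint.
   Context: Setting: a switched system with subsystems $(A_k,B_k)$, $A_k\in\mathbb{R}^{n\times n}$, $B_k\in\mathbb{R}^{n\times m_k}$, $k\in[N]=\{1,\dots,N\}$; $A_k(p,j)$, $B_l(q,j)$ denote entries. Colored union graph $\mathcal G_c$: vertices $X=\{x_1,\dots,x_n\}$ and $U=\bigcup_{k}U_k$, $U_k=\{u^k_1,\dots,u^k_{m_k}\}$; for each $k$ and each $A_k(j,q)\ne0$ there is a state edge $(x_q,x_j)$ with color index $k$ (parallel edges of different colors are allowed), and for each $B_k(j,q)\neq 0$ an input edge $(u^k_q,x_j)$ with color index $k$. An input-state walk is a walk with tail in $U$ and head in $X$. The color index of a walk is the sequence of color indices of its edges. The reverse walk $p^c$ of $p=(e_1,\dots,e_k)$ is $(e_k^c,\dots,e_1^c)$ where $e^c$ reverses the direction of $e$ (keeping its color). For walks $p_1=(v_{i_1},\dots,v_{i_k})$ and $p_2=(v_{j_1},\dots,v_{j_{k'}})$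 (as vertex sequences), $\mathrm{ins}(p_1,p_2)=v_{i_{k^*}}$ with $k^*=\min\{q: i_q=j_q\}$ (the first vertex two walkers moving simultaneously along the walks occupy at the same time), and $\mathrm{ins}(p_1,p_2)=\emptyset$ if no such $q$ exists; if $\mathrm{ins}(p_1,p_2)\ne\emptyset$, $\mathrm{Pins}(p_1\backslash p_2)=(v_{i_1},\dots,v_{i_{k^*}})$ and $\mathrm{Pins}(p_2\backslash p_1)=(v_{j_1},\dots,v_{j_{k^*}})$. Multi-layer dynamic graph $\hat{\mathcal G}_{\bar l}$: layers $0,\dots,\bar l$. Layer 0: $\hat X_0=\{x^{00}_{p0}:p\in[n]\}$, $\hat U_0=\{u^{00}_{k,j0}: j\in[N],k\in[m_j]\}$, edges $(u^{00}_{k,j0},x^{00}_{q0})$ when $B_j(q,k)\ne0$. Layer $i\ge1$: $\hat X_i=\{x^{kt}_{ji}: j\in[n],k\in[N],t\in[N^{i-1}]\}$, $\hat U_i=\{u^{kt}_{j,li}: k,l\in[N],j\in[m_l],t\in[N^{i-1}]\}$, edges $(u^{kt}_{j,li},x^{kt}_{qi})$ when $B_l(q,j)\ne0$. Edges $(x^{k1}_{j1},x^{00}_{p0})$ when $A_k(p,j)\ne0$; for $i\ge2$, edges $(x^{kt}_{ji},x^{k't'}_{p,i-1})$ when $A_k(p,j)\ne 0$, for $k,k'\in[N]$, $t'\in[N^{i-2}]$, $t=(k'-1)N^{i-2}+t'$. An edge $(x^{kt}_{ji},\cdot)$ between layers has color index $k$. MDG-path: for an input-state walk $p$ of length $k$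 whose successive edges have colors $i_1,\dots,i_k$ and pass through vertices $u^{i_1}_{j_1},x_{j_2},\dots,x_{j_{k+1}}$, its MDG-path $\hat p$ (in any $\hat{\mathcal G}_{\bar l}$ with $\bar l\ge k$) is the unique path of the form $(u^{i_2,\bullet}_{j_1,i_1,k-1},x^{i_2,\bullet}_{j_2,k-1},x^{i_3,\bullet}_{j_3,k-2},\dots,x^{i_k,1}_{j_k,1},x^{00}_{j_{k+1},0})$, where the copy indices $\bullet$ are those forced by the edge structure (for $k=1$ it is $(u^{00}_{j_1,i_1 0},x^{00}_{j_2,0})$). *)

(* Defs.v *)
(* Indices k in [N] are represented by 'I_N
   (0-based); in the MDG superscripts colors are written 1-based (k.+1) so that
   the paper's copy-index encoding t = (k'-1) N^(i-2) + t' is literal. *)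
From HB Require Import structures.
From mathcomp Require Import all_boot all_order all_algebra.
Set Implicit Arguments. Unset Strict Implicit. Unset Printing Implicit Defensive.
Import Order.TTheory GRing.Theory Num.Theory.
Local Open Scope ring_scope.

Section Graphs.
Variables (R : realFieldType) (n N : nat) (m : 'I_N -> nat).
Variables (A : 'I_N -> 'M[R]_n) (B : forall k : 'I_N, 'M[R]_(n, m k)).

(* vertices of the colored union graph G_c: x_j (inl j) or u^k_q (inr (k;q)) *)
Definition cvertex := ('I_n + {k : 'I_N & 'I_(m k)})%type.

Definition cedge := (cvertex * 'I_N * cvertex)%type.
Definition etail (e : cedge) : cvertex := e.1.1.
Definition ecolor (e : cedge) : 'I_N := e.1.2.
Definition ehead (e : cedge) : cvertex := e.2.

Definition in_Gc (e : cedge) : bool :=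
  match e with
  | (inl q, k, inl j) => A k j q != 0
  | (inr u, k, inl j) => (tag u == k) && (B (tag u) j (tagged u) != 0)
  | _ => false
  end.

Definition is_walk (p : seq cedge) : bool :=
  all in_Gc p && sorted (fun e e' => ehead e == etail e') p.

Definition wverts (p : seq cedge) : seq cvertex :=
  match p with [::] => [::] | e :: _ => etail e :: map ehead p end.

Definition wcolors (p : seq cedge) : seq 'I_N := map ecolor p.

Definition is_U (v : cvertex) : bool := if v is inr _ then true else false.
Definition is_X (v : cvertex) : bool := if v is inl _ then true else false.

Definition input_state_walk (p : seq cedge) : bool :=
  match p with
  | [::] => false
  | e :: _ => [&& is_walk p, is_U (etail e) & is_X (ehead (last e p))]
  end.

Definition erev (e : cedge) : cedge := (ehead e, ecolor e, etail e).
Definition rev_walk (p : seq cedge) : seq cedge := rev (map erev p).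

Definition vdisjoint (T : eqType) (s1 s2 : seq T) : bool :=
  ~~ has (fun v => v \in s2) s1.

(* ins: the (0-based) index k*-1 of the first position at which the two
   vertex sequences agree, if any *)
Definition ins_idx (T : eqType) (s1 s2 : seq T) : option nat :=
  let q := find (fun pr => pr.1 == pr.2) (zip s1 s2) in
  if (q < size (zip s1 s2))%N then Some q else None.

Definition ins (T : eqType) (s1 s2 : seq T) : option T :=
  obind (onth s1) (ins_idx s1 s2).

Definition Pins (T : eqType) (s1 s2 : seq T) : seq T :=
  match ins_idx s1 s2 with Some q => take q.+1 s1 | None => [::] end.

(* Pins(p1 \ p2) as a sub-walk of p1 (its first k*-1 edges); its vertex
   sequence is Pins (wverts p1) (wverts p2) (a single vertex when k* = 1) *)
Definition Pins_walk (p1 p2 : seq cedge) : seq cedge :=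
  match ins_idx (wverts p1) (wverts p2) with Some q => take q p1 | None => [::] end.

(* MDG vertices: x^{kt}_{j,i} = inl (i, (k,t), j);
                 u^{kt}_{j,l,i} = inr (i, (k,t), (l;j)) with j in [m_l].
   Layer 0 vertices have superscript (0,0). *)
Definition mvertex :=
  ((nat * (nat * nat) * 'I_n) + (nat * (nat * nat) * {l : 'I_N & 'I_(m l)}))%type.

Definition valid_sup (i : nat) (kt : nat * nat) : bool :=
  if i == 0%N then kt == (0,0)%N
  else [&& 0 < kt.1 <= N & 0 < kt.2 <= N ^ i.-1]%N.

Definition in_MDG (lbar : nat) (v : mvertex) : bool :=
  match v with
  | inl (i, kt, _) => (i <= lbar)%N && valid_sup i kt
  | inr (i, kt, _) => (i <= lbar)%N && valid_sup i kt
  end.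

Definition MDG_edge (lbar : nat) (v w : mvertex) : bool :=
  in_MDG lbar v && in_MDG lbar w &&
  match v, w with
  | inr (i, kt, u), inl (i', kt', q) =>
      [&& i == i', kt == kt' & B (tag u) q (tagged u) != 0]
  | inl (i, (k, t), j), inl (i', (k', t'), p) =>
      [&& i == i'.+1,
          [exists kk : 'I_N, (k == kk.+1) && (A kk p j != 0)] &
          (if i == 1%N then (k', t') == (0, 0)%N
           else t == ((k' - 1) * N ^ (i - 2) + t')%N)]
  | _, _ => false
  end.

(* copy index t encoding the color sequence (1-based colors) *)
Fixpoint code (cs : seq nat) : nat :=
  match cs with
  | [::] => 1%N
  | c :: cs' => ((c - 1) * N ^ size cs' + code cs')%N
  end.

(* superscript (k,t) of a layer-(size cs) vertex whose walk continues with
   edges of colors cs *)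
Definition msup (cs : seq 'I_N) : nat * nat :=
  match cs with
  | [::] => (0, 0)%N
  | c :: cs' => ((c : nat).+1, code (map (fun c : 'I_N => (c : nat).+1) cs'))
  end.

Definition mvert_of (v : cvertex) (cs : seq 'I_N) : mvertex :=
  match v with
  | inl j => inl (size cs, msup cs, j)
  | inr u => inr (size cs, msup cs, u)
  end.

Fixpoint mdg_heads (p : seq cedge) : seq mvertex :=
  match p with
  | [::] => [::]
  | e :: p' => mvert_of (ehead e) (wcolors p') :: mdg_heads p'
  end.

(* MDG-path of a walk p of length K with colors i_1..i_K through
   u^{i_1}_{j_1}, x_{j_2}, ..., x_{j_{K+1}}:
   (u^{i_2,.}_{j_1,i_1,K-1}, x^{i_2,.}_{j_2,K-1}, ..., x^{i_K,1}_{j_K,1}, x^{00}_{j_{K+1},0}) *)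
Definition mdg_path (p : seq cedge) : seq mvertex :=
  match p with
  | [::] => [::]
  | e :: p' => mvert_of (etail e) (wcolors p') :: mdg_heads p
  end.

End Graphs.

(* Main.v *)
Require Import Defs.
From HB Require Import structures.
From mathcomp Require Import all_boot all_order all_algebra.
From mathcomp Require Import zify.
Import Order.TTheory GRing.Theory Num.Theory.
Set Implicit Arguments. Unset Strict Implicit. Unset Printing Implicit Defensive.

Lemma code_bnd (N : nat) (s : seq 'I_N) :
  0 < code N (map (fun c : 'I_N => (c : nat).+1) s) <= N ^ size s.
Proof.
elim: s => [|c s IH] //=.
rewrite expnS subn1 /=.
move: IH; set x := code _ _; set P := N ^ size s.
have := ltn_ord c; rewrite size_map -/P.
move=> hc /andP [h1 h2]; apply/andP; split; first lia.
have := leq_mul hc (leqnn P). nia.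
Qed.

Lemma code_inj (N : nat) (s s' : seq 'I_N) : size s = size s' ->
  code N (map (fun c : 'I_N => (c : nat).+1) s) =
  code N (map (fun c : 'I_N => (c : nat).+1) s') -> s = s'.
Proof.
elim: s s' => [|c s IH] [|c' s'] //= [hs].
rewrite !size_map !subn1 /= hs.
have := code_bnd s; have := code_bnd s'; rewrite hs.
set x := code _ _; set x' := code _ _; set P := N ^ size s'.
move=> /andP[a1 a2] /andP[b1 b2] E.
have cc : (c : nat) = c'.
  case: (ltngtP c c') => // h.
  - have := leq_mul h (leqnn P); nia.
  - have := leq_mul h (leqnn P); nia.
have ex : x = x' by lia.
by rewrite (IH s' hs (esym ex)); congr cons; apply: val_inj.
Qed.

Lemma msup_inj (N : nat) (s s' : seq 'I_N) : size s = size s' ->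
  msup s = msup s' -> s = s'.
Proof.
case: s s' => [|c s] [|c' s'] //= [hs] [hc hcode].
by rewrite (code_inj hs hcode); congr cons; apply: val_inj.
Qed.

Lemma mvert_inj n N (m : 'I_N -> nat) (v v' : cvertex n m) cs cs' :
  mvert_of v cs = mvert_of v' cs' -> v = v' /\ cs = cs'.
Proof.
case: v => [j|u]; case: v' => [j'|u'] //= [h1 h2 h3].
- by split; [rewrite h3 | exact: msup_inj].
- by split; [rewrite h3 | exact: msup_inj].
Qed.
Section W.
Variables (R : realFieldType) (n N : nat) (m : 'I_N -> nat).
Variables (A : 'I_N -> 'M[R]_n) (B : forall k : 'I_N, 'M[R]_(n, m k)).

Lemma heads_mem (e0 : cedge n m) q x : x \in mdg_heads q ->
  exists2 r, r < size q & x = mvert_of (ehead (nth e0 q r)) (drop r.+1 (wcolors q)).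
Proof.
elim: q => [|e q IH] //=; rewrite in_cons => /orP [/eqP ->|/IH [r hr ->]].
  by exists 0%N => //=; rewrite drop0.
by exists r.+1.
Qed.

Lemma path_mem (e : cedge n m) p' x : x \in mdg_path (e :: p') ->
  exists2 r, r <= size (e :: p') &
    x = mvert_of (nth (etail e) (wverts (e :: p')) r) (drop (maxn r 1) (wcolors (e :: p'))).
Proof.
rewrite /mdg_path in_cons => /orP [/eqP ->|/(heads_mem e) [r hr ->]].
  by exists 0%N => //=; rewrite drop0.
exists r.+1; first exact: hr.
rewrite /wverts /=.
idtac.
by rewrite -[ehead e :: _]/(map (@ehead n N m) (e :: p')) (nth_map e).
Qed.

Lemma in_Gc_head (e : cedge n m) : in_Gc A B e -> is_X (ehead e).
Proof. by case: e => [[[q|u] k] [j|u']]. Qed.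

Lemma in_Gc_tail (e : cedge n m) u : in_Gc A B e -> etail e = inr u -> tag u = ecolor e.
Proof. by case: e => [[[q|u0] k] [j|u']] //= /andP[/eqP h _] [<-]. Qed.

Lemma wverts_rcons (e : cedge n m) p : sorted (fun e e' => ehead e == etail e') (e :: p) ->
  wverts (e :: p) = rcons (map (@etail n N m) (e :: p)) (ehead (last e p)).
Proof.
elim: p e => [|e2 p IH] e //= /andP [/eqP h hs].
move: (IH e2 hs) => /= [<-]; by rewrite h.
Qed.

Lemma wverts_rev_aux (q : seq (cedge n m)) el :
  wverts (rev (map (@erev n N m) (rcons q el))) = ehead el :: rev (map (@etail n N m) (rcons q el)).
Proof.
rewrite map_rcons rev_rcons /= map_rcons rev_rcons.
by rewrite map_rev -map_comp.
Qed.

Lemma wverts_rev (p : seq (cedge n m)) : sorted (fun e e' => ehead e == etail e') p ->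
  wverts (rev_walk p) = rev (wverts p).
Proof.
case: p => [|e p] // hs; rewrite (wverts_rcons hs).
rewrite rev_rcons /rev_walk.
case/lastP: p hs => [|p el] hs.
  by [].
by rewrite -rcons_cons wverts_rev_aux last_rcons.
Qed.

Lemma wcolors_rev (p : seq (cedge n m)) : wcolors (rev_walk p) = rev (wcolors p).
Proof. by rewrite /wcolors /rev_walk map_rev -map_comp. Qed.

Lemma nth_wverts_X (e : cedge n m) p r : all (in_Gc A B) (e :: p) ->
  0 < r <= size (e :: p) -> is_X (nth (etail e) (wverts (e :: p)) r).
Proof.
move=> /allP hall /andP [h0 hr]; case: r h0 hr => [|r] // _ hr /=.
rewrite -[ehead e :: _]/(map (@ehead n N m) (e :: p)) (nth_map e) //.
by apply: in_Gc_head; apply: hall; apply: mem_nth.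
Qed.

Lemma size_wverts (e : cedge n m) p : size (wverts (e :: p)) = (size (e :: p)).+1.
Proof. by rewrite /= size_map. Qed.

End W.

Lemma find_zipC (T : eqType) (s1 s2 : seq T) :
  find (fun pr => pr.1 == pr.2) (zip s2 s1) = find (fun pr => pr.1 == pr.2) (zip s1 s2).
Proof.
elim: s1 s2 => [|a s1 IH] [|b s2] //=.
by rewrite IH eq_sym.
Qed.

Lemma ins_idxC (T : eqType) (s1 s2 : seq T) : ins_idx s1 s2 = ins_idx s2 s1.
Proof. by rewrite /ins_idx find_zipC !size_zip minnC. Qed.

Lemma ins_idx_le (T : eqType) (x0 : T) (s1 s2 : seq T) d :
  d < size s1 -> d < size s2 -> nth x0 s1 d = nth x0 s2 d ->
  exists2 q, q <= d & ins_idx s1 s2 = Some q.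
Proof.
move=> h1 h2 he.
have hz : d < size (zip s1 s2) by rewrite size_zip leq_min h1 h2.
have hq : find (fun pr => pr.1 == pr.2) (zip s1 s2) <= d.
  rewrite leqNgt; apply/negP => /(before_find (x0, x0)).
  by rewrite nth_zip_cond hz /= he eqxx.
exists (find (fun pr => pr.1 == pr.2) (zip s1 s2)) => //.
by rewrite /ins_idx (leq_ltn_trans hq hz).
Qed.


Theorem lemma3 (R : realFieldType) (n N : nat) (m : 'I_N -> nat)
  (A : 'I_N -> 'M[R]_n) (B : forall k : 'I_N, 'M[R]_(n, m k))
  (pi pj : seq (cedge n m)) (lbar : nat) :
  input_state_walk A B pi ->
  input_state_walk A B pj ->
  (maxn (size pi) (size pj) <= lbar)%N ->
  (vdisjoint (wverts pi) (wverts pj) \/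
   (ins (wverts (rev_walk pi)) (wverts (rev_walk pj)) != None /\
    wcolors (Pins_walk (rev_walk pi) (rev_walk pj))
      != wcolors (Pins_walk (rev_walk pj) (rev_walk pi)))) ->
  vdisjoint (mdg_path pi) (mdg_path pj).
Proof.
case: pi => [|ei pi'] // hi; case: pj hi => [|ej pj'] // hi hj _ H.
move: hi hj; rewrite /input_state_walk => /and3P [/andP [gi si] ui _] /and3P [/andP [gj sj] uj _].
apply/hasPn => x /path_mem [r hr ->]; apply/negP => /path_mem [s hs].
move=> /mvert_inj [hv hc].
set Vi := wverts (ei :: pi') in hv H; set Vj := wverts (ej :: pj') in hv H.
set Ci := wcolors (ei :: pi') in hc; set Cj := wcolors (ej :: pj') in hc.
have key : drop r Ci = drop s Cj.
  case: r hr hv hc => [|r] hr hv hc; case: s hs hv hc => [|s] hs hv hc.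
  - move: hv ui; rewrite /Vi /Vj /= => hv.
    case eu: (etail ei) => [//|u] _ /=.
    have t1 := in_Gc_tail (allP gi ei (mem_head _ _)) eu.
    have t2 := in_Gc_tail (allP gj ej (mem_head _ _)) (etrans (esym hv) eu).
    move: hc; rewrite /Ci /Cj /= !drop0 => ->; by rewrite -t1 -t2.
  - have := nth_wverts_X gj (r := s.+1) hs; rewrite -/Vj -hv /Vi /=.
    by case: (etail ei) ui.
  - have := nth_wverts_X gi (r := r.+1) hr; rewrite -/Vi hv /Vj /=.
    by case: (etail ej) uj.
  - by move: hc; rewrite (maxn_idPl (ltn0Sn r)) (maxn_idPl (ltn0Sn s)).
have szi : size Ci = size (ei :: pi') by rewrite size_map.
have szj : size Cj = size (ej :: pj') by rewrite size_map.
have hd : size (ei :: pi') - r = size (ej :: pj') - s by rewrite -szi -szj -!size_drop key.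
set d := size (ei :: pi') - r in hd.
have hvi : r < size Vi by rewrite size_wverts.
have hvj : s < size Vj by rewrite size_wverts.
have hv' : nth (etail ei) Vi r = nth (etail ei) Vj s by rewrite hv (set_nth_default (etail ei) (etail ej) hvj).
case: H => [hdis | [_ hneq]].
  move/hasPn: hdis => /(_ (nth (etail ei) Vi r) (mem_nth _ hvi)).
  by rewrite hv' mem_nth.
rewrite /Pins_walk !wverts_rev // -/Vi -/Vj in hneq.
have h1 : d < size (rev Vi) by rewrite size_rev size_wverts /d; lia.
have h2 : d < size (rev Vj) by rewrite size_rev size_wverts hd; lia.
have heq : nth (etail ei) (rev Vi) d = nth (etail ei) (rev Vj) d.
  rewrite size_rev in h1; rewrite size_rev in h2.
  rewrite (nth_rev _ h1) (nth_rev _ h2) !size_wverts.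
  have -> : (size (ei :: pi')).+1 - d.+1 = r by rewrite /d; lia.
  by rewrite hd; have -> : (size (ej :: pj')).+1 - (size (ej :: pj') - s).+1 = s by lia.
have [q hq hins] := ins_idx_le h1 h2 heq.
rewrite hins ins_idxC hins in hneq.
move/negP: hneq; apply.
rewrite /wcolors !map_take.
rewrite (congr1 (take q) (wcolors_rev (ei :: pi'))) (congr1 (take q) (wcolors_rev (ej :: pj'))).
rewrite -/Ci -/Cj -(take_takel _ hq) -[take q (rev Cj)](take_takel _ hq) !take_rev.
have -> : size Ci - d = r by rewrite szi /d; lia.
have -> : size Cj - d = s by rewrite szj hd; lia.
by rewrite key.
Qed.
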